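(* Let $k\geq1$, $n\geq2k$, and let $\mathcal{S}$ be an antichain in $\mathcal{F}=\mathcal{F}_{2k}^{[1,n]}$ that contains the set $[1,2]\cup[n-2k+3,n]$. Then $B_{\mathcal{S}}$ is $(k-1)$-neighborly w.r.t. $[n]$.
   Context: Notation: $[m,n]=\{m,\dots,n\}$; $2k$-subsets of $[n]$ are identified with increasing vectors, and $\leq_p$ is the componentwise order. $\mathcal{F}_{2k}^{[1,n]}$ is the set of sets $\{i_1,i_1+1,\dots,i_k,i_k+1\}$ with $1\leq i_1$, $i_k\leq n-1$, $i_j\leq i_{j+1}-2$, ordered by $\leq_p$. $\mathcal{F}(\mathcal{S})$ is the order ideal generated by an antichain $\mathcal{S}$, $B(\mathcal{S})$ the pure complex whose facets are the sets of $\mathcal{F}(\mathcal{S})$, $\mathcal{S}-\mathbf{1}_{2k}=\{x-\mathbf{1}_{2k}: x\in\mathcal{S},\min x>1\}$, and $B_{\mathcal{S}}$ is the complex generated by the facets of $B(\mathcal{S})$ that are not facets of $B(\mathcal{S}-\mathbf{1}_{2k})$. A complex is $i$-neighborly w.r.t. $V$ if every subset of $V$ of size at most $i$ is a face. *)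

(* Defs.v *)
From mathcomp Require Import all_boot.
Set Implicit Arguments. Unset Strict Implicit. Unset Printing Implicit Defensive.

(* 2k-subsets of [n] are represented by their increasing vectors (seq nat). *)

Definition pairs_of (i : seq nat) : seq nat :=
  flatten [seq [:: a; a.+1] | a <- i].

Definition inF (k n : nat) (x : seq nat) : Prop :=
  exists i : seq nat,
    [/\ size i = k,
        (forall j, j < k -> 1 <= nth 0 i j /\ nth 0 i j <= n - 1),
        (forall j, j.+1 < k -> nth 0 i j <= nth 0 i j.+1 - 2)
      & x = pairs_of i].

Definition le_p (x y : seq nat) : Prop :=
  size x = size y /\ forall j, j < size x -> nth 0 x j <= nth 0 y j.

Definition antichainF (k n : nat) (S : seq nat -> Prop) : Prop :=
  (forall x, S x -> inF k n x) /\
  (forall x y, S x -> S y -> le_p x y -> x = y).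

Definition idealF (k n : nat) (S : seq nat -> Prop) (y : seq nat) : Prop :=
  inF k n y /\ exists2 x, S x & le_p y x.

Definition shift1 (S : seq nat -> Prop) (z : seq nat) : Prop :=
  exists2 x, S x & (forall a, a \in x -> 1 < a) /\ z = [seq a.-1 | a <- x].

(* facets of B_S: facets of B(S) (= sets of F(S)) not facets of B(S - 1_{2k}) *)
Definition facetB_S (k n : nat) (S : seq nat -> Prop) (x : seq nat) : Prop :=
  idealF k n S x /\ ~ idealF k n (shift1 S) x.

Definition face_of (facet : seq nat -> Prop) (sigma : seq nat) : Prop :=
  exists2 x, facet x & {subset sigma <= x}.

Definition neighborly (i n : nat) (face : seq nat -> Prop) : Prop :=
  forall sigma : seq nat, uniq sigma ->
    (forall a, a \in sigma -> 1 <= a <= n) -> size sigma <= i -> face sigma.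

(* Main.v *)
Require Import Defs.
From mathcomp Require Import all_boot zify.
From Stdlib Require Import Classical.
Set Implicit Arguments. Unset Strict Implicit. Unset Printing Implicit Defensive.

Lemma size_pairs i : size (pairs_of i) = 2 * size i.
Proof. elim: i => //= a i IH. rewrite /pairs_of /= -/(pairs_of i) IH. lia. Qed.

Lemma pairs_cons a i : pairs_of (a :: i) = a :: a.+1 :: pairs_of i.
Proof. by []. Qed.

Lemma nth_pairs i p : p < 2 * size i ->
  nth 0 (pairs_of i) p = nth 0 i (p %/ 2) + p %% 2.
Proof.
elim: i p => [|a i IH] p /=; first by lia.
rewrite pairs_cons.
case: p => [|[|q]] Hp; [by rewrite /= addn0 | by rewrite /= addn1 |].
rewrite /= IH; last by lia.
have -> : q.+2 %/ 2 = (q %/ 2).+1 by lia.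
have -> : q.+2 %% 2 = q %% 2 by lia.
by [].
Qed.

Lemma mem_pairs i a : a \in pairs_of i ->
  exists2 t, t < size i & a = nth 0 i t \/ a = (nth 0 i t).+1.
Proof.
move=> /(nthP 0) [p]; rewrite size_pairs => Hp <-.
exists (p %/ 2); first by lia.
rewrite nth_pairs //. have : p %% 2 < 2 by lia.
case: (p %% 2) => [|[|]] //= _; [left | right]; lia.
Qed.

Lemma pairs_mem i t : t < size i -> nth 0 i t \in pairs_of i /\ (nth 0 i t).+1 \in pairs_of i.
Proof.
move=> Ht; split; apply/(nthP 0).
- exists (2 * t); first by rewrite size_pairs; lia.
  rewrite nth_pairs; last by lia.
  have -> : 2 * t %/ 2 = t by lia. have -> : 2 * t %% 2 = 0 by lia. by rewrite addn0.
- exists (2 * t).+1; first by rewrite size_pairs; lia.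
  rewrite nth_pairs; last by lia.
  have -> : (2 * t).+1 %/ 2 = t by lia. have -> : (2 * t).+1 %% 2 = 1 by lia. by rewrite addn1.
Qed.

Lemma le_p_pairs i j : size i = size j ->
  (forall t, t < size i -> nth 0 i t <= nth 0 j t) -> le_p (pairs_of i) (pairs_of j).
Proof.
move=> Hs H; split; first by rewrite !size_pairs Hs.
move=> p; rewrite size_pairs => Hp.
rewrite !nth_pairs; try lia. have := H (p %/ 2). lia.
Qed.

Definition validb (k lo n : nat) (i : seq nat) : Prop :=
  [/\ size i = k,
      (forall j, j < k -> lo <= nth 0 i j /\ nth 0 i j <= n - 1)
    & (forall j, j.+1 < k -> nth 0 i j <= nth 0 i j.+1 - 2)].

Lemma validb_top k i n t : validb k 1 n i -> t < k -> nth 0 i t + 2 * (k - 1 - t) <= n - 1.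
Proof.
case=> _ Hb Hg.
suff H : forall d t, t + d = k - 1 -> t < k -> nth 0 i t + 2 * d <= n - 1.
  move=> Ht; apply: H => //; lia.
elim=> [|d IH] u Hu Hk.
- have := Hb u Hk; lia.
- have := IH u.+1 ltac:(lia) ltac:(lia). have := Hg u ltac:(lia). have := Hb u.+1 ltac:(lia). have := Hb u ltac:(lia). lia.
Qed.

Lemma validb_incr k lo n i t u : 1 <= lo -> validb k lo n i -> t < u -> u < k -> nth 0 i t + 2 <= nth 0 i u.
Proof.
move=> Hlo [_ Hb Hg] Htu Hu.
suff H : forall d t, t + d.+1 = u -> nth 0 i t + 2 <= nth 0 i u.
  apply: (H (u - t.+1)); lia.
elim=> [|d IH] v Hv.
- have := Hg v ltac:(lia). have := Hb u ltac:(lia). have := Hb v ltac:(lia). rewrite -Hv addn1. lia.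
- have := IH v.+1 ltac:(lia). have := Hg v ltac:(lia). have := Hb v.+1 ltac:(lia). have := Hb v ltac:(lia). lia.
Qed.

Lemma validb_uniq k lo n i : 1 <= lo -> validb k lo n i -> uniq i.
Proof.
move=> Hlo Hv; have [Hs _ _] := Hv.
apply/(uniqP 0) => t u; rewrite !inE => Ht Hu Heq; rewrite Hs in Ht Hu.
case: (ltngtP t u) => // H.
- have := validb_incr Hlo Hv H ltac:(lia). rewrite Heq -[X in _ <= X](addn0 (nth 0 i u)) leq_add2l //.
- have := validb_incr Hlo Hv H ltac:(lia). rewrite Heq -[X in _ <= X](addn0 (nth 0 i u)) leq_add2l //.
Qed.

Lemma cover_pairs n : forall m k lo (s : seq nat), n.+1 - lo <= m -> lo + 2 * k <= n.+1 ->
  (forall a, a \in s -> lo <= a <= n) -> size s <= k ->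
  exists i, validb k lo n i /\ {subset s <= pairs_of i}.
Proof.
elim=> [|m IH] [|k] lo s Hm Hk Hs Hsz.
- exists [::]; split; first by split => // j; rewrite ltn0.
  by case: s Hsz Hs.
- lia.
- exists [::]; split; first by split => // j; rewrite ltn0.
  by case: s Hsz Hs.
case: (boolP (lo \in s)) => Hlo.
- pose s' := [seq a <- s | lo.+1 < a].
  have Hsz' : size s' <= k.
    have : size s' < size s.
      rewrite size_filter -(count_predC (fun a => lo.+1 < a) s) -addn1 leq_add2l.
      rewrite -has_count; apply/hasP; exists lo => //=; by rewrite ltnNge leqnSn.
    lia.
  have Hb' : forall a, a \in s' -> lo.+2 <= a <= n.
    move=> a; rewrite mem_filter => /andP [H1 H2]; have := Hs a H2; lia.
  have [i' [[Hs1 Hb1 Hg1] Hsub]] := IH k lo.+2 s' ltac:(lia) ltac:(lia) Hb' Hsz'.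
  exists (lo :: i'); split; first split.
  + by rewrite /= Hs1.
  + case=> [|j] /= Hj; first by lia.
    have := Hb1 j ltac:(lia); lia.
  + case=> [|j] /= Hj.
    * have := Hb1 0 ltac:(lia); lia.
    * exact: Hg1.
  + move=> a Ha; rewrite pairs_cons !inE.
    case: (ltnP lo.+1 a) => Hla.
    * apply/orP; right; apply/orP; right; apply: Hsub; by rewrite mem_filter Hla.
    * have := Hs a Ha. move=> Hh. apply/orP.
      have [->|Hne] := eqVneq a lo; first by left.
      right; apply/orP; left; apply/eqP; lia.
case: (ltnP (lo + 2 * k.+1) n.+1) => Hlt.
- have Hb' : forall a, a \in s -> lo.+1 <= a <= n.
    move=> a Ha; have := Hs a Ha. have : a != lo by apply: contraNneq Hlo => <-.
    lia.
  have [i [[Hs1 Hb1 Hg1] Hsub]] := IH k.+1 lo.+1 s ltac:(lia) ltac:(lia) Hb' Hsz.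
  exists i; split => //; split => // j Hj; have := Hb1 j Hj; lia.
- exists [seq lo + 2 * t | t <- iota 0 k.+1]; split; first split.
  + by rewrite size_map size_iota.
  + move=> j Hj; rewrite (nth_map 0) ?size_iota // nth_iota //; lia.
  + move=> j Hj; rewrite !(nth_map 0) ?size_iota // ?nth_iota //; lia.
  + move=> a Ha; have := Hs a Ha => Hab.
    have Ht : (a - lo) %/ 2 < size (iota 0 k.+1) by rewrite size_iota; lia.
    have := pairs_mem (i := [seq lo + 2 * t | t <- iota 0 k.+1]) (t := (a - lo) %/ 2).
    rewrite size_map (nth_map 0) // nth_iota; last by rewrite size_iota in Ht.
    move=> /(_ Ht) [H1 H2].
    have : (a - lo) %% 2 < 2 by lia.
    case E: ((a - lo) %% 2) => [|[|]] // _.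
    * have -> : a = lo + 2 * (0 + (a - lo) %/ 2) by lia. exact: H1.
    * have -> : a = (lo + 2 * (0 + (a - lo) %/ 2)).+1 by lia. exact: H2.
Qed.

Definition M n k i := \sum_(t < k) (n - nth 0 i t).

Lemma chain k n i t0 : validb k 1 n i -> t0 < k ->
  exists t1, [/\ t0 <= t1, t1 < k,
    (forall s, t0 <= s -> s < t1 -> nth 0 i s.+1 = nth 0 i s + 2) &
    (t1.+1 < k -> nth 0 i t1 + 3 <= nth 0 i t1.+1)].
Proof.
move=> [Hs Hb Hg].
suff H : forall d t0, t0 + d.+1 = k -> exists t1, [/\ t0 <= t1, t1 < k,
    (forall s, t0 <= s -> s < t1 -> nth 0 i s.+1 = nth 0 i s + 2) &
    (t1.+1 < k -> nth 0 i t1 + 3 <= nth 0 i t1.+1)].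
  move=> Ht; apply: (H (k - t0.+1)); lia.
elim=> [|d IH] u Hu.
- exists u; split => //; [lia | move=> s H1 H2; lia | lia].
- case: (ltnP (nth 0 i u + 2) (nth 0 i u.+1)) => Hc.
  + exists u; split => //; [lia | move=> s H1 H2; lia | lia].
  + have [t1 [H1 H2 H3 H4]] := IH u.+1 ltac:(lia).
    exists t1; split => //; first lia.
    move=> s Hs1 Hs2. case: (eqVneq s u) => [->|Hne]; last by apply: H3; lia.
    have := Hg u ltac:(lia). have := Hb u ltac:(lia). have := Hb u.+1 ltac:(lia). lia.
Qed.

Lemma shift_step k n (sig : seq nat) i j :
  validb k 1 n i -> uniq sig -> size sig < k -> {subset sig <= pairs_of i} ->
  (forall t, t < k -> nth 0 i t < nth 0 j t /\ nth 0 j t <= n - 1) ->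
  exists i', [/\ validb k 1 n i', (forall t, t < k -> nth 0 i' t <= nth 0 j t),
     {subset sig <= pairs_of i'} & M n k i' < M n k i].
Proof.
move=> Hv Hu Hsz Hsub Hj; have [Hs Hb Hg] := Hv.
have [t0 Ht0 Hn0] : exists2 t0, t0 < k & nth 0 i t0 \notin sig.
  case: (boolP (all (fun a => a \in sig) i)) => Ha.
  - have : size i <= size sig.
      apply: uniq_leq_size; first exact: (validb_uniq (lo := 1)) Hv.
      by move=> x Hx; have := allP Ha x Hx.
    lia.
  - have [x Hx Hxn] := allPn Ha.
    have [t0 Ht0 Hx0] := nthP 0 Hx.
    exists t0; first by rewrite -Hs. by rewrite Hx0.
have [t1 [H01 H1k Hch Hend]] := chain Hv Ht0.
clear Hv.
pose i' := [seq (if (t0 <= t) && (t <= t1) then (nth 0 i t).+1 else nth 0 i t) | t <- iota 0 k].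
have Hi' : forall t, t < k -> nth 0 i' t = (if (t0 <= t) && (t <= t1) then (nth 0 i t).+1 else nth 0 i t).
  by move=> t Ht; rewrite (nth_map 0) ?size_iota // nth_iota.
exists i'; split.
- split; first by rewrite size_map size_iota.
  + move=> t Ht; rewrite Hi' //; have := Hb t Ht; have := Hj t Ht; case: ifP => _; lia.
  + move=> t Ht; rewrite !Hi' //; try lia.
    have := Hg t Ht; have := Hb t ltac:(lia); have := Hb t.+1 Ht.
    case: (leqP t0 t) => A; case: (leqP t t1) => B; case: (leqP t0 t.+1) => C;
      case: (leqP t.+1 t1) => D /=; try lia.
    have := Hend ltac:(lia). have -> : t = t1 by lia. lia.
- move=> t Ht; rewrite Hi' //; have := Hj t Ht; case: ifP => _; lia.
- have Hsz' : size i' = k by rewrite size_map size_iota.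
  move=> a Ha; have [s Hs' Has] := mem_pairs (Hsub a Ha); rewrite Hs in Hs'.
  have P := fun u (Hu : u < k) => pairs_mem (i := i') (t := u) ltac:(by rewrite Hsz').
  case E: ((t0 <= s) && (s <= t1)).
  + case: Has => Has.
    * have Hne : s != t0 by apply: contraNneq Hn0 => <-; rewrite -Has.
      have Hs1 : s.-1 < k by lia.
      have [_ H2] := P _ Hs1. rewrite Hi' // in H2.
      have -> : a = (if (t0 <= s.-1) && (s.-1 <= t1) then (nth 0 i s.-1).+1 else nth 0 i s.-1).+1; last by [].
      have -> : (t0 <= s.-1) && (s.-1 <= t1) by move/andP: E => [E1 E2]; apply/andP; split; lia.
      have := Hch s.-1 ltac:(move/andP: E => [E1 E2]; lia) ltac:(move/andP: E => [E1 E2]; lia).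
      have -> : s.-1.+1 = s by move/andP: E => [E1 E2]; lia.
      lia.
    * have [H1 _] := P _ Hs'. by rewrite Hi' // E -Has in H1.
  + have [H1 H2] := P _ Hs'. rewrite Hi' // E in H1 H2. by case: Has => ->.
- have HR : \sum_(t < k | t != Ordinal Ht0) (n - nth 0 i' t) <= \sum_(t < k | t != Ordinal Ht0) (n - nth 0 i t).
    apply: leq_sum => t _. rewrite Hi' //; case: ifP => _; lia.
  rewrite /M (bigD1 (Ordinal Ht0)) //= [X in _ < X](bigD1 (Ordinal Ht0)) //=.
  rewrite Hi' // leqnn H01 /=. have := Hj t0 Ht0. move: HR. set A := \sum_(t < k | _) _. set B := \sum_(t < k | _) _. set c := nth 0 i t0. set d := nth 0 j t0. clear -H01. clearbody A B c d. lia.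
Qed.

Lemma validb_inF k n i : validb k 1 n i -> inF k n (pairs_of i).
Proof. by case=> H1 H2 H3; exists i; split. Qed.

Theorem lemma3p14 (k n : nat) (S : seq nat -> Prop) :
  1 <= k -> 2 * k <= n ->
  antichainF k n S ->
  S ([:: 1; 2] ++ iota (n - 2 * k + 3) (2 * k - 2)) ->
  neighborly (k - 1) n (face_of (facetB_S k n S)).
Proof.
move=> Hk Hn [HSF _] Hx0 sig Hu Hb Hsz.
have main : forall m i, M n k i < m -> validb k 1 n i -> idealF k n S (pairs_of i) ->
    {subset sig <= pairs_of i} -> face_of (facetB_S k n S) sig.
  elim=> // m IH i Hm Hv Hid Hsub.
  case: (classic (idealF k n (shift1 S) (pairs_of i))) => Hsh; last first.
    by exists (pairs_of i).
  case: Hsh => _ [z [x Sx [Hgt ->]] Hle].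
  have [j [Hj1 Hj2 Hj3 Ex]] := HSF x Sx.
  have Hij : forall t, t < k -> nth 0 i t < nth 0 j t /\ nth 0 j t <= n - 1.
    move=> t Ht; have [Hs Hbi _] := Hv.
    case: Hle => _ Hle. have := Hle (2 * t). rewrite size_pairs Hs => /(_ ltac:(lia)).
    rewrite nth_pairs ?Hs; last by lia.
    rewrite (nth_map 0); last by rewrite Ex size_pairs Hj1; lia.
    rewrite Ex nth_pairs ?Hj1; last by lia.
    have -> : 2 * t %/ 2 = t by lia. have -> : 2 * t %% 2 = 0 by lia.
    have := Hj2 t Ht. have := Hbi t Ht. clear. lia.
  have [i' [Hv' Hle' Hsub' HM]] := shift_step Hv Hu ltac:(lia) Hsub Hij.
  apply: (IH i') => //; first by lia.
  split; first exact: validb_inF.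
  exists x => //. rewrite Ex. have [Hs' _ _] := Hv'.
  apply: le_p_pairs; first by rewrite Hs' Hj1.
  by rewrite Hs'.
have Hb' : forall a, a \in [seq a <- sig | 2 < a] -> 3 <= a <= n.
  move=> a; rewrite mem_filter => /andP [H1 H2]; have := Hb a H2; lia.
have [ir [[Hr1 Hr2 Hr3] Hrsub]] := @cover_pairs n n (k - 1) 3 _ ltac:(lia) ltac:(lia) Hb'
   ltac:(rewrite size_filter; exact: leq_trans (count_size _ _) Hsz).
pose i0 := 1 :: ir.
have Hv0 : validb k 1 n i0.
  split; first by rewrite /= Hr1; lia.
  - case=> [|t] /= Ht; first by lia.
    have := Hr2 t ltac:(lia); lia.
  - case=> [|t] /= Ht.
    + have := Hr2 0 ltac:(lia); lia.
    + apply: Hr3; lia.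
apply: (main (M n k i0).+1 i0) => //.
- split; first exact: validb_inF.
  exists ([:: 1; 2] ++ iota (n - 2 * k + 3) (2 * k - 2)) => //.
  split; first by rewrite size_pairs size_cat size_iota /= Hr1; lia.
  move=> p; rewrite size_pairs /= Hr1 => Hp.
  rewrite nth_pairs /=; last by rewrite Hr1; lia.
  case: p Hp => [|[|q]] Hp //=.
  rewrite nth_iota; last by lia.
  have := validb_top Hv0 (t := q.+2 %/ 2) ltac:(lia).
  rewrite /i0.
  have -> : q.+2 %/ 2 = (q %/ 2).+1 by lia.
  have -> : q.+2 %% 2 = q %% 2 by lia.
  rewrite /=. clear. lia.
- move=> a Ha; rewrite /i0 pairs_cons !inE.
  case: (ltnP 2 a) => H2.
  + apply/orP; right; apply/orP; right; apply: Hrsub; by rewrite mem_filter H2.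
  + have := Hb a Ha => H3. apply/orP.
    have [->|Hne] := eqVneq a 1; first by left.
    right; apply/orP; left; apply/eqP; lia.
Qed.
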